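(* For $\epsilon\ll1$ and $a$ belonging to a bounded interval, let $u_{\epsilon,a}$ be solutions of $\epsilon^2\Delta u+\mu u-|u|^2u+\epsilon af=0$ on $\mathbb{R}^2$ converging to $0$ as $|x|\to\infty$. Then there exists a constant $K>0$ such that $$|u_{\epsilon,a}(x)|\leq K\big(\sqrt{\max(\mu(x),0)}+\epsilon^{1/3}\big),\qquad\forall x\in\mathbb{R}^2.$$ As a consequence, if for every $\xi=\rho e^{i\theta}$ one considers the local coordinates $s=(s_1,s_2)$ in the basis $(e^{i\theta},ie^{i\theta})$, then the rescaled maps $\tilde u_{\epsilon,a}(s)=\epsilon^{-1/3}u_{\epsilon,a}(\xi+s\epsilon^{2/3})$ are uniformly bounded on the half-planes $[s_0,\infty)\times\mathbb{R}$, for every $s_0\in\mathbb{R}$.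
   Context: Points of $\mathbb{R}^2$ are identified with complex numbers. $\mu\in C^\infty(\mathbb{R}^2,\mathbb{R})$ is radial, $\mu(x)=\mu_{\mathrm{rad}}(|x|)$, $\mu_{\mathrm{rad}}$ smooth with an even extension, $\mu\in L^\infty$, $\mu_{\mathrm{rad}}'<0$ on $(0,\infty)$, $\mu_{\mathrm{rad}}(\rho)=0$ for a unique $\rho>0$. $f\in C^\infty(\mathbb{R}^2,\mathbb{R}^2)$, $f(x)=f_{\mathrm{rad}}(|x|)\frac{x}{|x|}$, $f_{\mathrm{rad}}$ smooth with an odd extension, $f\in L^1\cap L^\infty$, $f_{\mathrm{rad}}>0$ on $(0,\infty)$. *)

(* Defs.v *)
From Stdlib Require Import Reals.
From mathcomp Require all_boot all_algebra all_classical all_reals all_analysis Rstruct Rstruct_topology.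

Module L1Def.
Import mathcomp.boot.all_boot mathcomp.algebra.all_algebra mathcomp.classical.all_classical
       mathcomp.reals.all_reals mathcomp.analysis.all_analysis
       mathcomp.reals_stdlib.Rstruct mathcomp.analysis_stdlib.Rstruct_topology.
Import numFieldNormedType.Exports.
Local Open Scope ring_scope.
Local Open Scope ereal_scope.
Definition integrable_R2 (g : Rdefinitions.R -> Rdefinitions.R -> Rdefinitions.R) : Prop :=
  ((@lebesgue_measure Rdefinitions.R) \x (@lebesgue_measure Rdefinitions.R)).-integrable
     setT (fun p : Rdefinitions.R * Rdefinitions.R => ((g p.1 p.2)%:E)).
End L1Def.

From Coquelicot Require Import Coquelicot.
Open Scope R_scope.

(** Points of R^2 are pairs (x, y) ~ x + i y; functions on R^2 are curried. *)
Definition rnorm (x y : R) : R := sqrt (x ^ 2 + y ^ 2).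

Definition dx (g : R -> R -> R) : R -> R -> R := fun x y => Derive (fun t => g t y) x.
Definition dy (g : R -> R -> R) : R -> R -> R := fun x y => Derive (fun t => g x t) y.

Fixpoint dpart (w : list bool) (g : R -> R -> R) : R -> R -> R :=
  match w with
  | nil => g
  | cons b w' => (if b then dy else dx) (dpart w' g)
  end.

Definition Ck (k : nat) (g : R -> R -> R) : Prop :=
  (forall w, (length w < k)%nat -> forall x y,
      ex_derive (fun t => dpart w g t y) x /\ ex_derive (fun t => dpart w g x t) y) /\
  (forall w, (length w <= k)%nat -> forall x y,
      continuous (fun p : R * R => dpart w g (fst p) (snd p)) (x, y)).

Definition smooth2 (g : R -> R -> R) : Prop := forall k, Ck k g.

Definition smooth1 (h : R -> R) : Prop := forall n x, ex_derive_n h n x.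

Definition lap (g : R -> R -> R) : R -> R -> R :=
  fun x y => dx (dx g) x y + dy (dy g) x y.

Definition reC (u : R -> R -> C) : R -> R -> R := fun x y => fst (u x y).
Definition imC (u : R -> R -> C) : R -> R -> R := fun x y => snd (u x y).
Definition lapC (u : R -> R -> C) : R -> R -> C :=
  fun x y => (lap (reC u) x y, lap (imC u) x y).

Definition mu_hyp (mu : R -> R -> R) (mu_rad : R -> R) (rho : R) : Prop :=
  smooth2 mu /\
  smooth1 mu_rad /\ (forall r, mu_rad (- r) = mu_rad r) /\
  (forall x y, mu x y = mu_rad (rnorm x y)) /\
  (exists M, forall x y, Rabs (mu x y) <= M) /\
  (forall r, 0 < r -> Derive mu_rad r < 0) /\
  0 < rho /\ mu_rad rho = 0 /\ (forall r, 0 < r -> mu_rad r = 0 -> r = rho).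

Definition f_hyp (f : R -> R -> C) (f_rad : R -> R) : Prop :=
  smooth2 (reC f) /\ smooth2 (imC f) /\
  smooth1 f_rad /\ (forall r, f_rad (- r) = - f_rad r) /\
  (forall x y, (x, y) <> (0, 0) ->
     f x y = (f_rad (rnorm x y) * (x / rnorm x y), f_rad (rnorm x y) * (y / rnorm x y))) /\
  L1Def.integrable_R2 (fun x y => Cmod (f x y)) /\
  (exists M, forall x y, Cmod (f x y) <= M) /\
  (forall r, 0 < r -> 0 < f_rad r).

Definition is_solution (mu : R -> R -> R) (f : R -> R -> C) (eps a : R)
    (u : R -> R -> C) : Prop :=
  Ck 2 (reC u) /\ Ck 2 (imC u) /\
  (forall x y,
     Cplus (Cplus (Cmult (RtoC (eps ^ 2)) (lapC u x y)) (Cmult (RtoC (mu x y)) (u x y)))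
       (Cplus (Copp (Cmult (RtoC (Cmod (u x y) ^ 2)) (u x y)))
              (Cmult (RtoC (eps * a)) (f x y))) = RtoC 0) /\
  (forall e, 0 < e -> exists R0, forall x y, R0 < rnorm x y -> Cmod (u x y) < e).

(* Main.v *)
Require Import Defs.
From Stdlib Require Import Reals Lra Psatz.
From mathcomp Require all_boot all_order all_algebra all_classical all_reals all_analysis Rstruct Rstruct_topology.
Module EVT2.
Import mathcomp.boot.all_boot mathcomp.order.all_order mathcomp.algebra.all_algebra mathcomp.classical.all_classical
       mathcomp.reals.all_reals mathcomp.analysis.all_analysis
       mathcomp.reals_stdlib.Rstruct mathcomp.analysis_stdlib.Rstruct_topology.
Import numFieldNormedType.Exports.
Import Order.TTheory GRing.Theory Num.Theory.
Local Open Scope classical_set_scope.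
Local Open Scope ring_scope.

Lemma evt2 (D : R -> R -> R) (a b : R) : Rle a b ->
  (forall x y (eps : R), Rlt 0 eps -> exists del : R, Rlt 0 del /\
     forall x' y', Rlt (Rabs (Rminus x' x)) del -> Rlt (Rabs (Rminus y' y)) del ->
       Rlt (Rabs (Rminus (D x' y') (D x y))) eps) ->
  exists x0 y0, (Rle a x0 /\ Rle x0 b) /\ (Rle a y0 /\ Rle y0 b) /\
    forall x y, (Rle a x /\ Rle x b) -> (Rle a y /\ Rle y b) -> Rle (D x y) (D x0 y0).
Proof.
move=> /RleP ab Dc.
pose A := (`[a, b] `*` `[a, b]) : set (R * R).
have A0 : A !=set0 by exists (a, a); split; rewrite /= in_itv /= lexx ab.
have cA : compact A by apply: compact_setX; exact: segment_compact.
have cf : {within A, continuous (fun p : R * R => D p.1 p.2)}.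
  apply: continuous_subspaceT => -[x y].
  rewrite /continuous_at; apply/(@cvgrPdist_lt _ R^o) => e /RltP e0.
  have [del [/RltP del0 H]] := Dc x y e e0.
  exists ([set x' | Rlt (Rabs (Rminus x' x)) del], [set y' | Rlt (Rabs (Rminus y' y)) del]) => /=.
    split; exists del => //= z; rewrite /ball /= => /RltP; rewrite -RabsE -RminusE Rabs_minus_sym //.
  case=> x' y' /= [/= h1 h2].
  rewrite distrC -RminusE -RabsE; apply/RltP; exact: H.
have [[x0 y0] /set_mem [/= h1 h2] hmax] := compact_EVT_max A0 cA cf.
exists x0, y0; split; [|split].
- by move: h1; rewrite in_itv /= => /andP[/RleP ? /RleP ?].
- by move: h2; rewrite in_itv /= => /andP[/RleP ? /RleP ?].
move=> x y [/RleP hx1 /RleP hx2] [/RleP hy1 /RleP hy2]; apply/RleP.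
apply: (hmax (x, y)); apply/mem_set; split; rewrite /= in_itv /=; apply/andP; split => //.
Qed.
End EVT2.
From Coquelicot Require Import Coquelicot.
Open Scope R_scope.


Definition Sf (e q : R) : R := (q + sqrt (q ^ 2 + e ^ 2)) / 2.
Definition S1 (e q : R) : R := (1 + q / sqrt (q ^ 2 + e ^ 2)) / 2.
Definition S2 (e q : R) : R := e ^ 2 / (2 * ((q ^ 2 + e ^ 2) * sqrt (q ^ 2 + e ^ 2))).

Lemma w_pos e q : 0 < e -> 0 < q ^ 2 + e ^ 2.
Proof. intros; nra. Qed.

Lemma dSf (e q : R) : 0 < e -> is_derive (Sf e) q (S1 e q).
Proof.
  intros he. unfold Sf, S1. auto_derive.
  - apply w_pos; auto.
  - replace (q * (q * 1) + e * (e * 1)) with (q ^ 2 + e ^ 2) by ring.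
    assert (hw := sqrt_lt_R0 _ (w_pos e q he)). field. lra.
Qed.

Lemma dS1 (e q : R) : 0 < e -> is_derive (S1 e) q (S2 e q).
Proof.
  intros he. unfold S1, S2.
  assert (hw := sqrt_lt_R0 _ (w_pos e q he)).
  assert (hs := sqrt_sqrt _ (Rlt_le _ _ (w_pos e q he))).
  auto_derive; replace (q * (q * 1) + e * (e * 1)) with (q ^ 2 + e ^ 2) by ring.
  - split; [apply w_pos; auto|]. split; auto. lra.
  - set (w := sqrt (q ^ 2 + e ^ 2)) in *.
    replace (e ^ 2) with (w * w - q^2) by (rewrite hs; ring).
    replace (q ^ 2 + (w * w - q ^ 2)) with (w * w) by ring.
    field. lra.
Qed.

Lemma dmul (f g : R -> R) (x a b : R) : is_derive f x a -> is_derive g x b ->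
  is_derive (fun t => f t * g t) x (a * g x + f x * b).
Proof. intros. apply (is_derive_mult f g); auto. intros; apply Rmult_comm. Qed.
Lemma dplus (f g : R -> R) (x a b : R) : is_derive f x a -> is_derive g x b ->
  is_derive (fun t => f t + g t) x (a + b).
Proof. intros. apply (is_derive_plus f g); auto. Qed.
Lemma dminus (f g : R -> R) (x a b : R) : is_derive f x a -> is_derive g x b ->
  is_derive (fun t => f t - g t) x (a - b).
Proof. intros. apply (is_derive_minus f g); auto. Qed.
Lemma dval (f : R -> R) (x a b : R) : is_derive f x a -> a = b -> is_derive f x b.
Proof. intros; subst; auto. Qed.
Lemma dext (f g : R -> R) (x a : R) : (forall t, f t = g t) -> is_derive f x a -> is_derive g x a.
Proof. intros; eapply is_derive_ext; eauto. Qed.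
Lemma dcomp (f g : R -> R) (x a b : R) : is_derive f (g x) a -> is_derive g x b ->
  is_derive (fun t => f (g t)) x (b * a).
Proof. intros. apply (is_derive_comp f g); auto. Qed.

Section Psi.
Variables (B L1 e rho c : R).
Hypothesis he : 0 < e.
Hypothesis hrho : 0 < rho.
Definition hq (t : R) := (rho ^ 2 - t ^ 2 - c) / (2 * rho).
Definition G0 t := B * (L1 * Sf e (hq t) + e).
Definition G1 t := B * L1 * S1 e (hq t) * (- t / rho).
Definition G2 t := B * L1 * (S2 e (hq t) * (t / rho) ^ 2 - S1 e (hq t) / rho).

Lemma dhq (t : R) : is_derive hq t (- t / rho).
Proof. unfold hq. auto_derive; [auto|field; lra]. Qed.

Lemma dG0 (t : R) : is_derive G0 t (G1 t).
Proof.
  unfold G0, G1.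
  assert (H := dcomp (Sf e) hq t _ _ (dSf e (hq t) he) (dhq t)).
  apply dval with (B * (L1 * ((- t / rho) * S1 e (hq t)) + 0)).
  - apply (is_derive_scal (fun t => L1 * Sf e (hq t) + e)).
    apply dplus; [apply is_derive_scal; auto | apply (is_derive_const (V:=R_NormedModule))].
  - ring.
Qed.

Lemma dG1 (t : R) : is_derive G1 t (G2 t).
Proof.
  unfold G1, G2.
  assert (H := dcomp (S1 e) hq t _ _ (dS1 e (hq t) he) (dhq t)).
  apply dval with (B * L1 * ((- t / rho * S2 e (hq t)) * (- t / rho) + S1 e (hq t) * (- 1 / rho))).
  - apply (dext (fun t => B * L1 * (S1 e (hq t) * (- t / rho)))); [intros; ring|].
    apply (is_derive_scal (fun t => S1 e (hq t) * (- t / rho))).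
    eapply dval; [apply dmul; [exact H | auto_derive; [lra | reflexivity]] | simpl; field; lra].
  - field; lra.
Qed.
End Psi.

Section Sbounds.
Variables (e q : R).
Hypothesis he : 0 < e.
Let w := sqrt (q ^ 2 + e ^ 2).
Lemma w_facts : 0 < w /\ w * w = q ^ 2 + e ^ 2 /\ Rabs q < w /\ e <= w /\ w <= Rabs q + e.
Proof.
  assert (hw := sqrt_lt_R0 _ (w_pos e q he)).
  assert (hs := sqrt_sqrt _ (Rlt_le _ _ (w_pos e q he))).
  fold w in hw, hs.
  assert (Rabs q * Rabs q = q ^ 2) by (rewrite <- Rabs_mult, Rabs_right; [ring| nra]).
  assert (0 <= Rabs q) by apply Rabs_pos.
  repeat split; try lra; nra.
Qed.

Lemma Sf_ge : Rmax q 0 <= Sf e q.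
Proof.
  destruct w_facts as (h1 & h2 & h3 & h4 & h5). unfold Sf; fold w.
  unfold Rmax; destruct (Rle_dec q 0); unfold Rabs in *; destruct (Rcase_abs q); lra.
Qed.

Lemma Sf_le : Sf e q <= Rmax q 0 + e / 2.
Proof.
  destruct w_facts as (h1 & h2 & h3 & h4 & h5). unfold Sf; fold w.
  unfold Rmax; destruct (Rle_dec q 0); unfold Rabs in *; destruct (Rcase_abs q); lra.
Qed.

Lemma S1_ge : 0 <= S1 e q.
Proof.
  destruct w_facts as (h1 & h2 & h3 & h4 & h5). unfold S1; fold w.
  assert (-1 < q / w).
  { apply Rmult_lt_reg_r with w; auto. unfold Rdiv. rewrite Rmult_assoc, Rinv_l; [|lra].
    unfold Rabs in *; destruct (Rcase_abs q); lra. }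
  lra.
Qed.

Lemma S2_le : S2 e q <= 1 / (2 * e).
Proof.
  destruct w_facts as (h1 & h2 & h3 & h4 & h5). unfold S2; fold w.
  rewrite <- h2. apply Rmult_le_reg_r with (2 * (w * w * w) * (2 * e)).
  { apply Rmult_lt_0_compat; [|lra]. assert (0 < w * w * w) by (repeat apply Rmult_lt_0_compat; lra). lra. }
  unfold Rdiv. field_simplify; try lra. assert (0 <= e) by lra. assert (e * e <= w * w) by nra. assert (e * e * e <= w * w * w) by nra. nra. Qed.

Lemma S2q_le : - q * S2 e q <= 1 / 2.
Proof.
  destruct w_facts as (h1 & h2 & h3 & h4 & h5). unfold S2; fold w.
  rewrite <- h2.
  assert (0 < w * w * w) by (repeat apply Rmult_lt_0_compat; lra).
  assert (- q * (e ^ 2 / (2 * (w * w * w))) = (- q * e ^ 2) / (2 * (w * w * w))) by (field; lra).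
  rewrite H0. apply Rmult_le_reg_r with (2 * (w * w * w)); [lra|].
  unfold Rdiv. rewrite Rmult_assoc, Rinv_l; [|lra].
  assert (- q <= w) by (unfold Rabs in *; destruct (Rcase_abs q); lra).
  assert (e ^ 2 <= w * w) by nra.
  assert (0 <= e ^ 2) by nra.
  nra.
Qed.
End Sbounds.

Lemma lap_psi_le (B L1 e rho x y : R) : 0 <= B -> 0 <= L1 -> 0 < e -> 0 < rho ->
  B * L1 * (S2 e ((rho ^ 2 - x ^ 2 - y ^ 2) / (2 * rho)) * (x / rho) ^ 2
            - S1 e ((rho ^ 2 - x ^ 2 - y ^ 2) / (2 * rho)) / rho)
  + B * L1 * (S2 e ((rho ^ 2 - x ^ 2 - y ^ 2) / (2 * rho)) * (y / rho) ^ 2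
            - S1 e ((rho ^ 2 - x ^ 2 - y ^ 2) / (2 * rho)) / rho)
  <= B * L1 * (1 / (2 * e) + 1 / rho).
Proof.
  intros hB hL he hr.
  set (q := (rho ^ 2 - x ^ 2 - y ^ 2) / (2 * rho)).
  assert (h1 := S2_le e q he). assert (h2 := S2q_le e q he). assert (h3 := S1_ge e q he).
  assert (E : (x / rho) ^ 2 + (y / rho) ^ 2 = 1 - 2 * q / rho) by (unfold q; field; lra).
  assert (I : S2 e q * (x / rho) ^ 2 - S1 e q / rho + (S2 e q * (y / rho) ^ 2 - S1 e q / rho)
             <= 1 / (2 * e) + 1 / rho).
  { replace (S2 e q * (x / rho) ^ 2 - S1 e q / rho + (S2 e q * (y / rho) ^ 2 - S1 e q / rho))
      with (S2 e q + 2 / rho * (- q * S2 e q) - 2 * (S1 e q / rho)).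
    2:{ assert (H' : S2 e q * (x / rho) ^ 2 + S2 e q * (y / rho) ^ 2 = S2 e q + 2 / rho * (- q * S2 e q)).
        { replace (S2 e q * (x / rho) ^ 2 + S2 e q * (y / rho) ^ 2) with (S2 e q * ((x / rho) ^ 2 + (y / rho) ^ 2)) by ring.
          rewrite E. field. lra. }
        lra. }
    assert (0 <= S1 e q / rho) by (apply Rdiv_le_0_compat; lra).
    assert (2 / rho * (- q * S2 e q) <= 2 / rho * (1/2)).
    { apply Rmult_le_compat_l; auto. apply Rdiv_le_0_compat; lra. }
    replace (1 / rho) with (2 / rho * (1 / 2)) by (field; lra). lra. }
  assert (0 <= B * L1) by (apply Rmult_le_pos; auto).
  rewrite <- Rmult_plus_distr_l. apply Rmult_le_compat_l; auto.
Qed.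

Lemma max_d2 (g g1 : R -> R) (x0 g2 : R) :
  (forall t, is_derive g t (g1 t)) -> is_derive g1 x0 g2 ->
  (forall t, g t <= g x0) -> g2 <= 0.
Proof.
  intros Hg Hg1 Hmax.
  destruct (Rle_lt_dec g2 0) as [|Hpos]; auto. exfalso.
  apply is_derive_Reals in Hg1.
  destruct (Hg1 (g2 / 2)) as [d Hd]; [lra|].
  assert (Hs : forall s, 0 < s < d -> g1 (x0 + s) - g1 x0 >= g2 / 2 * s
                 /\ g1 (x0 - s) - g1 x0 <= g2 / 2 * (- s)).
  { intros s [s0 s1]. split.
    - assert (A := Hd s ltac:(lra) ltac:(rewrite Rabs_right; lra)).
      set (D := g1 (x0 + s) - g1 x0) in *.
      assert (D = D / s * s) by (field; lra).
      apply Rabs_def2 in A. nra.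
    - assert (A := Hd (- s) ltac:(lra) ltac:(rewrite Rabs_left; lra)).
      replace (x0 + - s) with (x0 - s) in A by ring.
      set (D := g1 (x0 - s) - g1 x0) in *.
      assert (D = D / (- s) * (- s)) by (field; lra).
      apply Rabs_def2 in A. nra. }
  set (h := d / 2).
  assert (hpos : 0 < h) by (unfold h; destruct d; simpl; lra).
  assert (hd : h < d) by (unfold h; destruct d; simpl; lra).
  set (k := fun t => g t - g1 x0 * (t - x0) - g2 / 4 * (t - x0) ^ 2).
  set (k' := fun t => g1 t - g1 x0 - g2 / 2 * (t - x0)).
  assert (Hk : forall c, derivable_pt_lim k c (k' c)).
  { intros c. apply is_derive_Reals. unfold k, k'.
    apply dminus; [apply dminus|].
    - apply Hg.
    - auto_derive; auto; lra.
    - auto_derive; auto; lra. }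
  destruct (MVT_cor2 k k' x0 (x0 + h)) as [c1 [E1 R1]]; [lra| intros; apply Hk|].
  destruct (MVT_cor2 k k' (x0 - h) x0) as [c2 [E2 R2]]; [lra| intros; apply Hk|].
  assert (K1 : k' c1 >= 0).
  { unfold k'. destruct (Hs (c1 - x0)) as [A _]; [lra|].
    replace (x0 + (c1 - x0)) with c1 in A by ring. lra. }
  assert (K2 : k' c2 <= 0).
  { unfold k'. destruct (Hs (x0 - c2)) as [_ A]; [lra|].
    replace (x0 - (x0 - c2)) with c2 in A by ring. lra. }
  assert (k (x0 + h) >= k x0) by nra.
  assert (k (x0 - h) >= k x0) by nra.
  unfold k in *.
  replace (x0 + h - x0) with h in * by ring.
  replace (x0 - h - x0) with (- h) in * by ring.
  replace (x0 - x0) with 0 in * by ring.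
  assert (g (x0 + h) <= g x0) by apply Hmax.
  assert (g (x0 - h) <= g x0) by apply Hmax.
  assert (0 < g2 * (h * h)) by (apply Rmult_lt_0_compat; nra).
  nra.
Qed.


Lemma cont_ed (g : R -> R -> R) (x y : R) :
  continuous (fun p : R * R => g (fst p) (snd p)) (x, y) ->
  forall eps, 0 < eps -> exists del, 0 < del /\ forall x' y',
    Rabs (x' - x) < del -> Rabs (y' - y) < del -> Rabs (g x' y' - g x y) < eps.
Proof.
  intros H eps he.
  destruct (proj1 (filterlim_locally _ _) H (mkposreal eps he)) as [d Hd].
  exists d; split; [apply cond_pos|]. intros x' y' h1 h2.
  apply (Hd (x', y')). split; simpl; auto.
Qed.

Lemma rnorm_ge_x x y : Rabs x <= rnorm x y.
Proof.
  unfold rnorm. rewrite <- sqrt_Rsqr_abs. apply sqrt_le_1_alt. unfold Rsqr. nra.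
Qed.
Lemma rnorm_ge_y x y : Rabs y <= rnorm x y.
Proof.
  unfold rnorm. rewrite <- sqrt_Rsqr_abs. apply sqrt_le_1_alt. unfold Rsqr. nra.
Qed.

Lemma exists_max (D : R -> R -> R) (R0 : R) :
  (forall x y, continuous (fun p : R * R => D (fst p) (snd p)) (x, y)) ->
  (forall x y, R0 < rnorm x y -> D x y < 0) ->
  forall x y, 0 < D x y -> exists x0 y0, 0 < D x0 y0 /\ forall x' y', D x' y' <= D x0 y0.
Proof.
  intros Hc Hout x y Hp.
  set (M := Rabs R0 + Rabs x + Rabs y + 1).
  assert (HM : 0 <= Rabs R0) by apply Rabs_pos.
  assert (Hx : 0 <= Rabs x) by apply Rabs_pos.
  assert (Hy : 0 <= Rabs y) by apply Rabs_pos.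
  destruct (EVT2.evt2 D (- M) M) as (x0 & y0 & hx0 & hy0 & Hm).
  - unfold M; lra.
  - intros a b eps he. apply (cont_ed D a b (Hc a b) eps he).
  - assert (Hin : D x y <= D x0 y0).
    { apply Hm; unfold M; split; unfold Rabs in *;
      repeat destruct Rcase_abs; lra. }
    exists x0, y0; split; [lra|].
    intros x' y'.
    destruct (Rle_dec (Rabs x') M) as [h1|h1]; destruct (Rle_dec (Rabs y') M) as [h2|h2].
    + apply Hm; split; unfold Rabs in *; repeat destruct Rcase_abs; lra.
    + assert (D x' y' < 0); [|lra]. apply Hout.
      assert (Rabs R0 < rnorm x' y') by (assert (H := rnorm_ge_y x' y'); unfold M in *; lra).
      unfold Rabs in *; repeat destruct Rcase_abs; lra.
    + assert (D x' y' < 0); [|lra]. apply Hout.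
      assert (Rabs R0 < rnorm x' y') by (assert (H := rnorm_ge_x x' y'); unfold M in *; lra).
      unfold Rabs in *; repeat destruct Rcase_abs; lra.
    + assert (D x' y' < 0); [|lra]. apply Hout.
      assert (Rabs R0 < rnorm x' y') by (assert (H := rnorm_ge_x x' y'); unfold M in *; lra).
      unfold Rabs in *; repeat destruct Rcase_abs; lra.
Qed.


Lemma rad_bounds (m : R -> R) (rho : R) :
  smooth1 m -> (forall r, 0 < r -> Derive m r < 0) -> 0 < rho -> m rho = 0 ->
  exists L c, 0 < L /\ 0 < c /\
    (forall r, 0 <= r <= rho -> m r <= L * (rho - r) /\ c * (rho - r) <= m r) /\
    (forall r, rho <= r -> m r <= 0).
Proof.
  intros Hs Hd Hr Hm.
  assert (Der : forall r, derivable_pt_lim m r (Derive m r)).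
  { intros r. apply is_derive_Reals. apply Derive_correct. exact (Hs 1%nat r). }
  assert (Dc : forall r, continuity_pt (fun r => - Derive m r) r).
  { intros r. apply (continuity_pt_opp (Derive m)). apply (proj2 (continuity_pt_filterlim _ _)).
    apply (ex_derive_continuous (Derive m)). exact (Hs 2%nat r). }
  destruct (continuity_ab_maj (fun r => - Derive m r) 0 rho) as [Mx [HMx _]]; [lra| intros; apply Dc|].
  destruct (continuity_ab_min (fun r => - Derive m r) (rho / 2) rho) as [mx [Hmx Imx]]; [lra| intros; apply Dc|].
  set (L := Rabs (- Derive m Mx) + 1).
  set (m0 := - Derive m mx).
  assert (hm0 : 0 < m0) by (unfold m0; assert (Derive m mx < 0) by (apply Hd; lra); lra).
  assert (hL : 0 < L) by (unfold L; assert (H := Rabs_pos (- Derive m Mx)); lra).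
  assert (Lb : forall c, 0 <= c <= rho -> - Derive m c <= L).
  { intros c hc. assert (H := HMx c hc). simpl in H.
    assert (H2 := Rle_abs (- Derive m Mx)). unfold L. lra. }
  assert (Up : forall r, rho / 2 <= r < rho -> m0 * (rho - r) <= m r).
  { intros r hr. destruct (MVT_cor2 m (Derive m) r rho) as [c [E Hc]]; [lra| intros; apply Der|].
    assert (m0 <= - Derive m c) by (apply Hmx; lra). nra. }
  exists L, (m0 / 2). split; [auto|]. split; [lra|]. split.
  - intros r hr. destruct (Req_dec r rho) as [->|hne].
    { rewrite Hm. split; nra. }
    destruct (MVT_cor2 m (Derive m) r rho) as [c [E Hc]]; [lra| intros; apply Der|].
    split.
    + assert (- Derive m c <= L) by (apply Lb; lra). nra.
    + destruct (Rle_lt_dec (rho / 2) r).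
      * assert (H := Up r ltac:(lra)). nra.
      * assert (H := Up (rho / 2) ltac:(lra)).
        destruct (MVT_cor2 m (Derive m) r (rho / 2)) as [c' [E' Hc']]; [lra| intros; apply Der|].
        assert (Derive m c' < 0) by (apply Hd; lra).
        assert (m (rho / 2) <= m r) by nra.
        nra.
  - intros r hr. destruct (Req_dec r rho) as [->|hne]; [lra|].
    destruct (MVT_cor2 m (Derive m) rho r) as [c [E Hc]]; [lra| intros; apply Der|].
    assert (Derive m c < 0) by (apply Hd; lra). nra.
Qed.

Definition qf (rho x y : R) : R := (rho ^ 2 - x ^ 2 - y ^ 2) / (2 * rho).

Lemma mu_bounds mu mu_rad rho : mu_hyp mu mu_rad rho ->
  exists L1 c, 0 < L1 /\ 0 < c /\ forall x y,
    mu x y <= L1 * Rmax (qf rho x y) 0 /\ c * Rmax (qf rho x y) 0 <= Rmax (mu x y) 0.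
Proof.
  intros (Hs2 & Hs1 & Hev & Hrad & Hb & Hd & Hr & Hm & Hu).
  destruct (rad_bounds mu_rad rho Hs1 Hd Hr Hm) as (L & c & hL & hc & H1 & H2).
  exists (2 * L), c. split; [lra|]. split; [auto|]. intros x y.
  rewrite Hrad. set (r := rnorm x y).
  assert (r0 : 0 <= r) by apply sqrt_pos.
  assert (r2 : r * r = x ^ 2 + y ^ 2) by (apply sqrt_sqrt; nra).
  assert (Eq : qf rho x y = (rho - r) * (rho + r) / (2 * rho)) by (unfold qf; replace (rho ^ 2 - x ^ 2 - y ^ 2) with (rho ^ 2 - r * r) by (rewrite r2; ring); field; lra).
  destruct (Rle_dec r rho) as [hle|hgt].
  - destruct (H1 r ltac:(lra)) as [A B].
    assert (q0 : 0 <= qf rho x y) by (rewrite Eq; apply Rdiv_le_0_compat; nra).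
    assert (q1 : (rho - r) / 2 <= qf rho x y).
    { rewrite Eq. apply Rmult_le_reg_r with (2 * rho); [lra|].
      unfold Rdiv. field_simplify; try lra. nra. }
    assert (q2 : qf rho x y <= rho - r).
    { rewrite Eq. apply Rmult_le_reg_r with (2 * rho); [lra|].
      unfold Rdiv. field_simplify; try lra. nra. }
    rewrite (Rmax_left (qf rho x y)); auto.
    assert (0 <= mu_rad r) by nra.
    rewrite (Rmax_left (mu_rad r)); auto. split; nra.
  - assert (q0 : qf rho x y < 0).
    { rewrite Eq. apply Rmult_lt_reg_r with (2 * rho); [lra|].
      unfold Rdiv. field_simplify; try lra. nra. }
    rewrite (Rmax_right (qf rho x y)); [|lra].
    assert (H := H2 r ltac:(lra)).
    split; [lra|]. assert (H' := Rmax_r (mu_rad r) 0). lra.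
Qed.


Lemma cont_qf (rho x y : R) : continuous (fun p : R * R => qf rho (fst p) (snd p)) (x, y).
Proof.
  apply (continuous_ext (fun p : R * R => mult (/ (2 * rho))
     (minus (minus (rho ^ 2) (mult (fst p) (fst p))) (mult (snd p) (snd p))))).
  { intros p. unfold qf, mult, minus, plus, opp; simpl. unfold Rdiv. ring. }
  apply (continuous_mult (K:=R_AbsRing) (fun _ => / (2 * rho))
     (fun p : R * R => minus (minus (rho ^ 2) (mult (fst p) (fst p))) (mult (snd p) (snd p))));
    [apply continuous_const|].
  apply (continuous_minus (K:=R_AbsRing) (V:=R_NormedModule)
     (fun p : R * R => minus (rho ^ 2) (mult (fst p) (fst p))) (fun p : R * R => mult (snd p) (snd p))).
  - apply (continuous_minus (K:=R_AbsRing) (V:=R_NormedModule) (fun _ : R * R => rho ^ 2)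
       (fun p : R * R => mult (fst p) (fst p))); [apply continuous_const|].
    apply (continuous_mult (K:=R_AbsRing) (fun p : R * R => fst p) (fun p : R * R => fst p));
      apply (continuous_fst (U:=R_UniformSpace) (V:=R_UniformSpace)).
  - apply (continuous_mult (K:=R_AbsRing) (fun p : R * R => snd p) (fun p : R * R => snd p));
      apply (continuous_snd (U:=R_UniformSpace) (V:=R_UniformSpace)).
Qed.

Lemma cont_P (B L1 e rho x y : R) : 0 < e ->
  continuous (fun p : R * R => B * (L1 * Sf e (qf rho (fst p) (snd p)) + e)) (x, y).
Proof.
  intros he.
  apply (continuous_comp (fun p : R * R => qf rho (fst p) (snd p)) (fun z => B * (L1 * Sf e z + e))).
  - apply cont_qf.
  - apply (ex_derive_continuous (fun z => B * (L1 * Sf e z + e))).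
    eexists. apply (is_derive_scal (fun z => L1 * Sf e z + e)).
    apply dplus; [apply is_derive_scal; apply dSf; auto | apply (is_derive_const (V:=R_NormedModule))].
Qed.

Lemma cont_D (u1 u2 P : R -> R -> R) (x y : R) :
  continuous (fun p : R * R => u1 (fst p) (snd p)) (x, y) ->
  continuous (fun p : R * R => u2 (fst p) (snd p)) (x, y) ->
  continuous (fun p : R * R => P (fst p) (snd p)) (x, y) ->
  continuous (fun p : R * R => u1 (fst p) (snd p) * u1 (fst p) (snd p)
     + u2 (fst p) (snd p) * u2 (fst p) (snd p) - P (fst p) (snd p)) (x, y).
Proof.
  intros h1 h2 h3.
  apply (continuous_minus (K:=R_AbsRing) (V:=R_NormedModule) (fun p : R * R => u1 (fst p) (snd p) * u1 (fst p) (snd p)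
     + u2 (fst p) (snd p) * u2 (fst p) (snd p)) (fun p : R * R => P (fst p) (snd p))); auto.
  apply (continuous_plus (K:=R_AbsRing) (V:=R_NormedModule) (fun p : R * R => u1 (fst p) (snd p) * u1 (fst p) (snd p))
     (fun p : R * R => u2 (fst p) (snd p) * u2 (fst p) (snd p))).
  - apply (continuous_mult (K := R_AbsRing) (fun p : R * R => u1 (fst p) (snd p)) (fun p : R * R => u1 (fst p) (snd p))); auto.
  - apply (continuous_mult (K := R_AbsRing) (fun p : R * R => u2 (fst p) (snd p)) (fun p : R * R => u2 (fst p) (snd p))); auto.
Qed.

Lemma dot_le a b c d : Rabs (a * c + b * d) <= sqrt (a ^ 2 + b ^ 2) * sqrt (c ^ 2 + d ^ 2).
Proof.
  rewrite <- sqrt_mult by nra.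
  rewrite <- sqrt_Rsqr_abs. apply sqrt_le_1_alt. unfold Rsqr. assert (0 <= (a * d - b * c) ^ 2) by apply pow2_ge_0. nra.
Qed.

Lemma Ck2_facts g : Ck 2 g -> forall x y,
  is_derive (fun t => g t y) x (dx g x y) /\
  is_derive (fun t => dx g t y) x (dx (dx g) x y) /\
  is_derive (fun t => g x t) y (dy g x y) /\
  is_derive (fun t => dy g x t) y (dy (dy g) x y) /\
  continuous (fun p : R * R => g (fst p) (snd p)) (x, y).
Proof.
  intros [H1 H2] x y.
  destruct (H1 nil ltac:(simpl; lia) x y) as [a1 a2].
  destruct (H1 (cons false nil) ltac:(simpl; lia) x y) as [b1 _].
  destruct (H1 (cons true nil) ltac:(simpl; lia) x y) as [_ c2].
  simpl in *.
  split; [|split; [|split; [|split]]].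
  - apply Derive_correct; auto.
  - apply Derive_correct; auto.
  - apply Derive_correct; auto.
  - apply Derive_correct; auto.
  - apply (H2 nil ltac:(simpl; lia) x y).
Qed.


Lemma Cmod2 (z : C) : Cmod z ^ 2 = fst z ^ 2 + snd z ^ 2.
Proof. unfold Cmod. apply pow2_sqrt. nra. Qed.

Lemma eq_parts (mu : R -> R -> R) (f u : R -> R -> C) (eps a x y : R) :
  Cplus (Cplus (Cmult (RtoC (eps ^ 2)) (lapC u x y)) (Cmult (RtoC (mu x y)) (u x y)))
       (Cplus (Copp (Cmult (RtoC (Cmod (u x y) ^ 2)) (u x y)))
              (Cmult (RtoC (eps * a)) (f x y))) = RtoC 0 ->
  eps ^ 2 * lap (reC u) x y + mu x y * reC u x y
    - (reC u x y * reC u x y + imC u x y * imC u x y) * reC u x y + eps * a * fst (f x y) = 0 /\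
  eps ^ 2 * lap (imC u) x y + mu x y * imC u x y
    - (reC u x y * reC u x y + imC u x y * imC u x y) * imC u x y + eps * a * snd (f x y) = 0.
Proof.
  intros H. rewrite Cmod2 in H. unfold reC, imC.
  assert (H1 := f_equal fst H). assert (H2 := f_equal snd H).
  unfold lapC, reC, imC in H1, H2. simpl in H1, H2.
  split; nra.
Qed.

Lemma final_alg (V P mu t a A F dot s X L1 rho b : R) :
  0 < t <= 1 -> 0 < rho -> 0 <= L1 -> 4 * A * F <= b -> L1 * (1 + 2 / rho) <= b -> 2 <= b ->
  P < V -> b ^ 2 * t ^ 2 <= P -> mu <= P / 2 -> 0 <= s -> s * s = V ->
  Rabs dot <= s * F -> Rabs a <= A -> 0 <= F ->
  t ^ 6 * X = - mu * V + V * V - t ^ 3 * a * dot ->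
  X <= b ^ 2 * L1 * (1 / (2 * t ^ 2) + 1 / rho) / 2 -> False.
Proof.
  intros ht hr hL hAF hb hb2 hPV hP hmu hs hsV hdot ha hF hX hXle.
  assert (t2 : 0 < t ^ 2) by (apply pow_lt; lra).
  assert (bt : 0 < b * t) by nra.
  assert (hV : 0 < V) by nra.
  assert (h1 : b * t < s) by nra.
  assert (h2 : (b * t) ^ 3 <= s ^ 3) by (apply pow_incr; lra).
  assert (h2' : 4 * A * F * t ^ 3 <= s ^ 3).
  { assert (0 <= t ^ 3) by (apply pow_le; lra).
    assert (b <= b ^ 3) by nra.
    assert (4 * A * F * t ^ 3 <= b ^ 3 * t ^ 3) by nra.
    replace ((b * t) ^ 3) with (b ^ 3 * t ^ 3) in h2 by ring. lra. }
  assert (h3 : Rabs (t ^ 3 * a * dot) <= V * V / 4).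
  { rewrite !Rabs_mult. rewrite (Rabs_right (t ^ 3)) by (apply Rle_ge, pow_le; lra).
    assert (0 <= Rabs a) by apply Rabs_pos. assert (0 <= Rabs dot) by apply Rabs_pos.
    assert (0 <= t ^ 3) by (apply pow_le; lra).
    assert (t ^ 3 * Rabs a * Rabs dot <= t ^ 3 * A * (s * F)).
    { apply Rmult_le_compat; try nra. }
    assert (t ^ 3 * A * (s * F) <= s ^ 4 / 4).
    { replace (s ^ 4 / 4) with (s * s ^ 3 / 4) by field. nra. }
    replace (V * V) with (s ^ 4) by (rewrite <- hsV; ring). lra. }
  assert (h4 : mu * V <= V * V / 2) by nra.
  assert (h3p : t ^ 3 * a * dot <= V * V / 4) by (assert (H := Rle_abs (t ^ 3 * a * dot)); lra).
  assert (h5 : V * V / 4 <= t ^ 6 * X). { rewrite hX. replace (- mu * V) with (- (mu * V)) by ring. generalize (mu * V) (V * V) (t ^ 3 * a * dot) h4 h3p. intros; lra. }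
  assert (h6 : b ^ 4 * t ^ 4 < V * V).
  { assert (b ^ 2 * t ^ 2 < V) by lra.
    replace (b ^ 4 * t ^ 4) with ((b ^ 2 * t ^ 2) * (b ^ 2 * t ^ 2)) by ring.
    assert (0 <= b ^ 2 * t ^ 2) by nra. nra. }
  assert (t6 : 0 <= t ^ 6) by (apply pow_le; lra).
  assert (h7 : t ^ 6 * X <= b ^ 2 * L1 * (t ^ 4 / 4 + t ^ 6 / (2 * rho))).
  { apply Rle_trans with (t ^ 6 * (b ^ 2 * L1 * (1 / (2 * t ^ 2) + 1 / rho) / 2)).
    - apply Rmult_le_compat_l; auto.
    - right. field. split; lra. }
  assert (h8 : t ^ 6 <= t ^ 4).
  { replace (t ^ 6) with (t ^ 4 * (t * t)) by ring.
    assert (0 <= t ^ 4) by (apply pow_le; lra). assert (t * t <= 1) by nra.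
    rewrite <- (Rmult_1_r (t ^ 4)) at 2. apply Rmult_le_compat_l; auto. }
  assert (h9 : b ^ 2 * L1 * (t ^ 4 / 4 + t ^ 6 / (2 * rho)) <= b ^ 2 * t ^ 4 * (L1 * (1 + 2 / rho)) / 4).
  { assert (t ^ 6 / (2 * rho) <= t ^ 4 / (2 * rho)) by (apply Rmult_le_compat_r; [apply Rlt_le, Rinv_0_lt_compat; lra| lra]).
    assert (0 <= b ^ 2 * L1) by nra.
    apply Rle_trans with (b ^ 2 * L1 * (t ^ 4 / 4 + t ^ 4 / (2 * rho))).
    - apply Rmult_le_compat_l; lra.
    - right. field. lra. }
  assert (h10 : b ^ 2 * t ^ 4 * (L1 * (1 + 2 / rho)) / 4 <= b ^ 4 * t ^ 4 / 4).
  { assert (0 <= b ^ 2 * t ^ 4) by nra.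
    assert (b <= b ^ 2) by nra.
    assert (b ^ 2 * t ^ 4 * (L1 * (1 + 2 / rho)) <= b ^ 2 * t ^ 4 * b ^ 2) by (apply Rmult_le_compat_l; lra).
    replace (b ^ 4 * t ^ 4) with (b ^ 2 * t ^ 4 * b ^ 2) by ring. lra. }
  lra.
Qed.


Section Core.
Variables (mu : R -> R -> R) (f : R -> R -> C) (rho L1 F A : R).
Hypothesis hrho : 0 < rho.
Hypothesis hL1 : 0 < L1.
Hypothesis hF : 0 <= F.
Hypothesis hA : 0 <= A.
Hypothesis Hmu : forall x y, mu x y <= L1 * Rmax (qf rho x y) 0.
Hypothesis Hf : forall x y, Cmod (f x y) <= F.

Definition bb := 4 * A * F + L1 * (1 + 2 / rho) + 2.

Lemma bb_facts : 4 * A * F <= bb /\ L1 * (1 + 2 / rho) <= bb /\ 2 <= bb.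
Proof.
  unfold bb. assert (0 <= 4 * A * F) by nra.
  assert (0 <= L1 * (1 + 2 / rho)).
  { apply Rmult_le_pos; [lra|]. assert (0 < 2 / rho) by (apply Rdiv_lt_0_compat; lra). lra. }
  lra.
Qed.

Lemma core (t a : R) (u : R -> R -> C) : 0 < t <= 1 -> Rabs a <= A ->
  is_solution mu f (t ^ 3) a u ->
  forall x y, Cmod (u x y) ^ 2 <= bb ^ 2 * (L1 * Sf (t ^ 2) (qf rho x y) + t ^ 2).
Proof.
  intros ht ha [Hc1 [Hc2 [Heq Hdec]]] x y.
  destruct bb_facts as (hb1 & hb2 & hb3).
  assert (he : 0 < t ^ 2) by (apply pow_lt; lra).
  set (e := t ^ 2) in *.
  set (B := bb ^ 2).
  assert (hB : 4 <= B) by (unfold B; nra).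
  set (P := fun x y => B * (L1 * Sf e (qf rho x y) + e)).
  assert (Pge : forall x y, B * e <= P x y /\ mu x y <= P x y / 2).
  { intros x' y'. unfold P.
    assert (h1 := Sf_ge e (qf rho x' y') he).
    assert (h2 := Rmax_r (qf rho x' y') 0).
    assert (h3 := Hmu x' y').
    assert (0 <= L1 * Sf e (qf rho x' y')) by nra.
    split; nra. }
  set (D := fun x y => reC u x y * reC u x y + imC u x y * imC u x y - P x y).
  rewrite Cmod2. fold (reC u x y) (imC u x y).
  apply Rnot_lt_le. intro Hlt.
  assert (Dpos : 0 < D x y) by (unfold D, P in *; simpl in Hlt; lra).
  assert (Dcont : forall x y, continuous (fun p : R * R => D (fst p) (snd p)) (x, y)).
  { intros x' y'. unfold D.
    apply cont_D.
    - apply (Ck2_facts _ Hc1 x' y').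
    - apply (Ck2_facts _ Hc2 x' y').
    - unfold P. apply cont_P; auto. }
  assert (hbt : 0 < bb * t) by nra.
  destruct (Hdec (bb * t) hbt) as [R0 HR0].
  assert (Dout : forall x y, R0 < rnorm x y -> D x y < 0).
  { intros x' y' hr. assert (H := HR0 x' y' hr).
    assert (H2 := Cmod2 (u x' y')). assert (H3 := Cmod_ge_0 (u x' y')).
    assert (Cmod (u x' y') ^ 2 < (bb * t) ^ 2) by nra.
    destruct (Pge x' y') as [P1 _].
    unfold D, reC, imC. unfold B, e in P1.
    replace ((bb * t) ^ 2) with (bb ^ 2 * t ^ 2) in * by ring. simpl in H2. nra. }
  destruct (exists_max D R0 Dcont Dout x y Dpos) as (x0 & y0 & Dp & Dmax).
  set (u1 := reC u) in *. set (u2 := imC u) in *.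
  assert (GX : dx (dx u1) x0 y0 * u1 x0 y0 + dx u1 x0 y0 * dx u1 x0 y0
               + (dx u1 x0 y0 * dx u1 x0 y0 + u1 x0 y0 * dx (dx u1) x0 y0)
             + (dx (dx u2) x0 y0 * u2 x0 y0 + dx u2 x0 y0 * dx u2 x0 y0
               + (dx u2 x0 y0 * dx u2 x0 y0 + u2 x0 y0 * dx (dx u2) x0 y0))
             - G2 B L1 e rho (y0 ^ 2) x0 <= 0).
  { apply (max_d2 (fun s => D s y0)
      (fun s => dx u1 s y0 * u1 s y0 + u1 s y0 * dx u1 s y0
              + (dx u2 s y0 * u2 s y0 + u2 s y0 * dx u2 s y0) - G1 B L1 e rho (y0 ^ 2) s) x0).
    - intros s.
      destruct (Ck2_facts _ Hc1 s y0) as (a1 & a2 & a3 & a4 & a5).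
      destruct (Ck2_facts _ Hc2 s y0) as (b1 & b2 & b3 & b4 & b5).
      unfold D.
      apply dminus; [apply dplus; [apply (dmul (fun t => u1 t y0) (fun t => u1 t y0)) | apply (dmul (fun t => u2 t y0) (fun t => u2 t y0))]; auto|].
      apply (dext (G0 B L1 e rho (y0 ^ 2))); [intros; reflexivity|].
      apply (dG0 B L1 e rho (y0 ^ 2) he hrho s).
    - destruct (Ck2_facts _ Hc1 x0 y0) as (a1 & a2 & a3 & a4 & a5).
      destruct (Ck2_facts _ Hc2 x0 y0) as (b1 & b2 & b3 & b4 & b5).
      apply dminus; [apply dplus; apply dplus|].
      + apply (dmul (fun t => dx u1 t y0) (fun t => u1 t y0)); auto.
      + apply (dmul (fun t => u1 t y0) (fun t => dx u1 t y0)); auto.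
      + apply (dmul (fun t => dx u2 t y0) (fun t => u2 t y0)); auto.
      + apply (dmul (fun t => u2 t y0) (fun t => dx u2 t y0)); auto.
      +
      apply (dG1 B L1 e rho (y0 ^ 2) he hrho x0).
    - intros s. apply Dmax. }
  assert (GY : dy (dy u1) x0 y0 * u1 x0 y0 + dy u1 x0 y0 * dy u1 x0 y0
               + (dy u1 x0 y0 * dy u1 x0 y0 + u1 x0 y0 * dy (dy u1) x0 y0)
             + (dy (dy u2) x0 y0 * u2 x0 y0 + dy u2 x0 y0 * dy u2 x0 y0
               + (dy u2 x0 y0 * dy u2 x0 y0 + u2 x0 y0 * dy (dy u2) x0 y0))
             - G2 B L1 e rho (x0 ^ 2) y0 <= 0).
  { apply (max_d2 (fun s => D x0 s)
      (fun s => dy u1 x0 s * u1 x0 s + u1 x0 s * dy u1 x0 s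
              + (dy u2 x0 s * u2 x0 s + u2 x0 s * dy u2 x0 s) - G1 B L1 e rho (x0 ^ 2) s) y0).
    - intros s.
      destruct (Ck2_facts _ Hc1 x0 s) as (a1 & a2 & a3 & a4 & a5).
      destruct (Ck2_facts _ Hc2 x0 s) as (b1 & b2 & b3 & b4 & b5).
      unfold D.
      apply dminus; [apply dplus; [apply (dmul (fun t => u1 x0 t) (fun t => u1 x0 t)) | apply (dmul (fun t => u2 x0 t) (fun t => u2 x0 t))]; auto|].
      apply (dext (G0 B L1 e rho (x0 ^ 2))).
      { intros z. unfold G0, hq, P, qf.
        replace (rho ^ 2 - z ^ 2 - x0 ^ 2) with (rho ^ 2 - x0 ^ 2 - z ^ 2) by ring. reflexivity. }
      apply (dG0 B L1 e rho (x0 ^ 2) he hrho s).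
    - destruct (Ck2_facts _ Hc1 x0 y0) as (a1 & a2 & a3 & a4 & a5).
      destruct (Ck2_facts _ Hc2 x0 y0) as (b1 & b2 & b3 & b4 & b5).
      apply dminus; [apply dplus; apply dplus|].
      + apply (dmul (fun t => dy u1 x0 t) (fun t => u1 x0 t)); auto.
      + apply (dmul (fun t => u1 x0 t) (fun t => dy u1 x0 t)); auto.
      + apply (dmul (fun t => dy u2 x0 t) (fun t => u2 x0 t)); auto.
      + apply (dmul (fun t => u2 x0 t) (fun t => dy u2 x0 t)); auto.
      + apply (dG1 B L1 e rho (x0 ^ 2) he hrho y0).
    - intros s. apply Dmax. }
  assert (Lap : G2 B L1 e rho (y0 ^ 2) x0 + G2 B L1 e rho (x0 ^ 2) y0 <= B * L1 * (1 / (2 * e) + 1 / rho)).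
  { unfold G2, hq.
    replace ((rho ^ 2 - y0 ^ 2 - x0 ^ 2) / (2 * rho)) with ((rho ^ 2 - x0 ^ 2 - y0 ^ 2) / (2 * rho)) by (field; lra).
    apply lap_psi_le; unfold B; nra. }
  assert (HX : u1 x0 y0 * lap u1 x0 y0 + u2 x0 y0 * lap u2 x0 y0 <= B * L1 * (1 / (2 * e) + 1 / rho) / 2).
  { unfold lap.
    assert (0 <= dx u1 x0 y0 * dx u1 x0 y0) by nra.
    assert (0 <= dx u2 x0 y0 * dx u2 x0 y0) by nra.
    assert (0 <= dy u1 x0 y0 * dy u1 x0 y0) by nra.
    assert (0 <= dy u2 x0 y0 * dy u2 x0 y0) by nra.
    nra. }
  destruct (eq_parts mu f u (t ^ 3) a x0 y0 (Heq x0 y0)) as [E1 E2].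
  change (reC u) with u1 in E1, E2. change (imC u) with u2 in E1, E2.
  set (V := u1 x0 y0 * u1 x0 y0 + u2 x0 y0 * u2 x0 y0) in *.
  assert (hV : 0 <= V) by (unfold V; nra).
  set (dot := u1 x0 y0 * fst (f x0 y0) + u2 x0 y0 * snd (f x0 y0)).
  assert (Hdot : Rabs dot <= sqrt V * F).
  { assert (H := dot_le (u1 x0 y0) (u2 x0 y0) (fst (f x0 y0)) (snd (f x0 y0))).
    replace (u1 x0 y0 ^ 2 + u2 x0 y0 ^ 2) with V in H by (unfold V; ring).
    assert (H2 := Hf x0 y0). unfold Cmod in H2.
    assert (0 <= sqrt V) by apply sqrt_pos.
    assert (sqrt V * sqrt (fst (f x0 y0) ^ 2 + snd (f x0 y0) ^ 2) <= sqrt V * F)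
      by (apply Rmult_le_compat_l; auto).
    unfold dot; lra. }
  assert (E1' : (t ^ 3) ^ 2 * lap u1 x0 y0 = - (mu x0 y0 * u1 x0 y0) + V * u1 x0 y0 - t ^ 3 * a * fst (f x0 y0)) by lra.
  assert (E2' : (t ^ 3) ^ 2 * lap u2 x0 y0 = - (mu x0 y0 * u2 x0 y0) + V * u2 x0 y0 - t ^ 3 * a * snd (f x0 y0)) by lra.
  assert (HE : t ^ 6 * (u1 x0 y0 * lap u1 x0 y0 + u2 x0 y0 * lap u2 x0 y0)
               = - mu x0 y0 * V + V * V - t ^ 3 * a * dot).
  { replace (t ^ 6 * (u1 x0 y0 * lap u1 x0 y0 + u2 x0 y0 * lap u2 x0 y0))
      with (u1 x0 y0 * ((t ^ 3) ^ 2 * lap u1 x0 y0) + u2 x0 y0 * ((t ^ 3) ^ 2 * lap u2 x0 y0)) by ring.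
    rewrite E1', E2'. unfold dot, V. ring. }
  destruct (Pge x0 y0) as [P1 P2].
  apply (final_alg V (P x0 y0) (mu x0 y0) t a A F dot (sqrt V)
           (u1 x0 y0 * lap u1 x0 y0 + u2 x0 y0 * lap u2 x0 y0) L1 rho bb); auto; try lra.
  - unfold D in Dp. unfold V. lra.
  - apply sqrt_pos.
  - apply sqrt_sqrt; auto.
Qed.
End Core.


Lemma tfacts (eps : R) : 0 < eps < 1 ->
  let t := Rpower eps (1 / 3) in
  0 < t /\ t < 1 /\ t ^ 3 = eps /\ Rpower eps (2 / 3) = t ^ 2 /\ Rpower eps (- (1 / 3)) = / t.
Proof.
  intros he t.
  assert (tp : 0 < t) by (unfold t, Rpower; apply exp_pos).
  assert (t3 : t ^ 3 = eps).
  { rewrite <- (Rpower_pow 3 t tp). unfold t. rewrite Rpower_mult.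
    replace (1 / 3 * INR 3) with 1 by (simpl; field). apply Rpower_1; lra. }
  split; [auto|]. split; [|split; [auto|split]].
  - destruct (Rlt_le_dec t 1); auto.
    assert (1 <= t ^ 3) by (replace 1 with (1 ^ 3) by ring; apply pow_incr; lra). lra.
  - rewrite <- (Rpower_pow 2 t tp). unfold t. rewrite Rpower_mult.
    f_equal. simpl. field.
  - rewrite Rpower_Ropp. reflexivity.
Qed.

Lemma sq_le (a b : R) : 0 <= a -> 0 <= b -> a ^ 2 <= b ^ 2 -> a <= b.
Proof. intros. destruct (Rle_lt_dec a b); auto. nra. Qed.

Theorem mainTheorem6 (mu : R -> R -> R) (mu_rad : R -> R) (rho : R)
    (f : R -> R -> C) (f_rad : R -> R) :
  mu_hyp mu mu_rad rho -> f_hyp f f_rad ->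
  forall A : R, 0 < A ->
  exists eps0 : R, 0 < eps0 /\
    (exists K : R, 0 < K /\
       forall eps a (u : R -> R -> C), 0 < eps < eps0 -> Rabs a <= A ->
         is_solution mu f eps a u ->
         forall x y,
           Cmod (u x y) <= K * (sqrt (Rmax (mu x y) 0) + Rpower eps (1 / 3))) /\
    (forall s0 : R, exists C0 : R,
       forall eps a (u : R -> R -> C), 0 < eps < eps0 -> Rabs a <= A ->
         is_solution mu f eps a u ->
         forall theta s1 s2, s0 <= s1 ->
           Rpower eps (- (1 / 3)) *
             Cmod (u (rho * cos theta + Rpower eps (2 / 3) * (s1 * cos theta - s2 * sin theta))
                     (rho * sin theta + Rpower eps (2 / 3) * (s1 * sin theta + s2 * cos theta)))
           <= C0).
Proof.
  intros Hmu Hf A hA.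
  destruct (mu_bounds mu mu_rad rho Hmu) as (L1 & c & hL1 & hc & Hmb).
  assert (hrho : 0 < rho) by (destruct Hmu as (_ & _ & _ & _ & _ & _ & h & _); exact h).
  destruct Hf as (_ & _ & _ & _ & _ & _ & [M HM] & _).
  set (F := Rabs M).
  assert (hF : 0 <= F) by apply Rabs_pos.
  assert (HF : forall x y, Cmod (f x y) <= F) by (intros; apply Rle_trans with M; [apply HM|apply Rle_abs]).
  assert (Hmu1 : forall x y, mu x y <= L1 * Rmax (qf rho x y) 0) by (intros; apply Hmb).
  set (B := bb rho L1 F A ^ 2).
  assert (hB : 0 <= B) by (unfold B; nra).
  assert (Est : forall eps a u, 0 < eps < 1 -> Rabs a <= A -> is_solution mu f eps a u ->
    forall x y, Cmod (u x y) ^ 2 <= B * (L1 * Rmax (qf rho x y) 0 + (L1 / 2 + 1) * Rpower eps (1 / 3) ^ 2)).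
  { intros eps a u he ha Hs x y.
    destruct (tfacts eps he) as (tp & t1 & t3 & _ & _).
    set (t := Rpower eps (1 / 3)) in *.
    rewrite <- t3 in Hs.
    assert (H := core mu f rho L1 F A hrho hL1 hF (Rlt_le _ _ hA) Hmu1 HF t a u ltac:(lra) ha Hs x y).
    assert (t2 : 0 < t ^ 2) by (apply pow_lt; lra).
    assert (H2 := Sf_le (t ^ 2) (qf rho x y) t2).
    fold B in H.
    apply Rle_trans with (1 := H). apply Rmult_le_compat_l; auto. nra. }
  exists 1. split; [lra|]. split.
  - set (K0 := B * L1 / c + B * (L1 / 2 + 1)).
    assert (hK0 : 0 <= K0).
    { unfold K0. assert (0 <= B * L1 / c) by (apply Rdiv_le_0_compat; nra). nra. }
    exists (K0 + 1). split; [lra|].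
    intros eps a u he ha Hs x y.
    destruct (tfacts eps he) as (tp & t1 & t3 & _ & _).
    set (t := Rpower eps (1 / 3)) in *.
    assert (E := Est eps a u he ha Hs x y). fold t in E.
    destruct (Hmb x y) as [_ Hc].
    set (m := Rmax (mu x y) 0) in *. set (q := Rmax (qf rho x y) 0) in *.
    assert (hm : 0 <= m) by apply Rmax_r.
    assert (hq : q <= m / c) by (apply Rmult_le_reg_l with c; auto; field_simplify; lra).
    assert (hsm := sqrt_pos m). assert (hsm2 := sqrt_sqrt m hm).
    apply sq_le.
    + apply Cmod_ge_0.
    + nra.
    + apply Rle_trans with (1 := E).
      assert (B * (L1 * q + (L1 / 2 + 1) * t ^ 2) <= K0 * (m + t ^ 2)).
      { unfold K0. assert (B * L1 * q <= B * L1 * (m / c)) by (apply Rmult_le_compat_l; nra).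
        assert (B * L1 * (m / c) = B * L1 / c * m) by (field; lra).
        assert (0 <= B * L1 / c) by (apply Rdiv_le_0_compat; nra).
        assert (0 <= B * (L1 / 2 + 1)) by nra.
        assert (0 <= t ^ 2) by nra.
        nra. }
      assert (K0 * (m + t ^ 2) <= (K0 + 1) ^ 2 * (sqrt m + t) ^ 2).
      { assert (m + t ^ 2 <= (sqrt m + t) ^ 2) by nra.
        assert (K0 <= (K0 + 1) ^ 2) by nra.
        assert (0 <= m + t ^ 2) by nra.
        apply Rle_trans with ((K0 + 1) ^ 2 * (m + t ^ 2)).
        - apply Rmult_le_compat_r; lra.
        - apply Rmult_le_compat_l; [nra|lra]. }
      replace (((K0 + 1) * (sqrt m + t)) ^ 2) with ((K0 + 1) ^ 2 * (sqrt m + t) ^ 2) by ring.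
      lra.
  - intros s0.
    set (K2 := B * (L1 * Rabs s0 + (L1 / 2 + 1))).
    assert (hK2 : 0 <= K2) by (unfold K2; assert (0 <= Rabs s0) by apply Rabs_pos; apply Rmult_le_pos; [auto| nra]).
    exists (K2 + 1).
    intros eps a u he ha Hs theta s1 s2 hs.
    destruct (tfacts eps he) as (tp & t1 & t3 & t2 & tm).
    set (t := Rpower eps (1 / 3)) in *.
    rewrite t2, tm.
    set (x := rho * cos theta + t ^ 2 * (s1 * cos theta - s2 * sin theta)).
    set (y := rho * sin theta + t ^ 2 * (s1 * sin theta + s2 * cos theta)).
    assert (E := Est eps a u he ha Hs x y). fold t in E.
    assert (Hq : Rmax (qf rho x y) 0 <= t ^ 2 * Rabs s0).
    { assert (cs := sin2_cos2 theta). unfold Rsqr in cs.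
      assert (Exy : x ^ 2 + y ^ 2 = (rho + t ^ 2 * s1) ^ 2 + (t ^ 2 * s2) ^ 2).
      { replace (x ^ 2 + y ^ 2) with (((rho + t ^ 2 * s1) ^ 2 + (t ^ 2 * s2) ^ 2) * (sin theta * sin theta + cos theta * cos theta)) by (unfold x, y; ring).
        rewrite cs. ring. }
      assert (0 <= t ^ 2 * Rabs s0) by (assert (0 <= Rabs s0) by apply Rabs_pos; nra).
      apply Rmax_lub; auto.
      unfold qf.
      replace (rho ^ 2 - x ^ 2 - y ^ 2) with (rho ^ 2 - (x ^ 2 + y ^ 2)) by ring. rewrite Exy.
      replace ((rho ^ 2 - ((rho + t ^ 2 * s1) ^ 2 + (t ^ 2 * s2) ^ 2)) / (2 * rho))
        with (t ^ 2 * (- s1) - (t ^ 2) ^ 2 * (s1 ^ 2 + s2 ^ 2) / (2 * rho)) by (field; lra).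
      assert (0 <= (t ^ 2) ^ 2 * (s1 ^ 2 + s2 ^ 2) / (2 * rho)) by (apply Rdiv_le_0_compat; nra).
      assert (- s1 <= Rabs s0) by (assert (Hs0 := Rle_abs (- s0)); rewrite Rabs_Ropp in Hs0; lra).
      assert (t ^ 2 * (- s1) <= t ^ 2 * Rabs s0) by (apply Rmult_le_compat_l; nra).
      lra. }
    assert (Hc : Cmod (u x y) <= (K2 + 1) * t).
    { apply sq_le.
      - apply Cmod_ge_0.
      - nra.
      - apply Rle_trans with (1 := E).
        assert (B * (L1 * Rmax (qf rho x y) 0) <= B * (L1 * (t ^ 2 * Rabs s0))).
        { apply Rmult_le_compat_l; auto. apply Rmult_le_compat_l; lra. }
        assert (K2 * t ^ 2 <= (K2 + 1) ^ 2 * t ^ 2) by (apply Rmult_le_compat_r; nra).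
        replace (((K2 + 1) * t) ^ 2) with ((K2 + 1) ^ 2 * t ^ 2) by ring.
        unfold K2 in *. nra. }
    apply Rmult_le_reg_l with t; auto.
    rewrite <- Rmult_assoc, Rinv_r by lra. lra.
Qed.
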